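(* Let $\mathbb{H}$ be the real quaternions, $\sigma=\mathrm{Id}$, $\delta=0$. A vector $(a_1,\dots,a_r)\in\mathbb{H}^r$ is a $(\sigma,\delta)$-multiplicity sequence if and only if either $a_1=a_2=\dots=a_r\in\mathbb{R}$, or $a_1,\dots,a_r\in\mathbb{H}\setminus\mathbb{R}$ and for $i=1,\dots,r-1$: $$\mathrm{Re}(a_{i+1})=\mathrm{Re}(a_i),\quad |a_{i+1}|=|a_i|,\quad \overline{a_{i+1}}\ne a_i.$$ In particular $(a,\dots,a)\in\mathbb{H}^r$ is a $(\sigma,\delta)$-multiplicity sequence for every $a\in\mathbb{H}$ and $r\in\mathbb{Z}_+$.
   Context: $\mathbb{H}[x]=\mathbb{H}[x;\mathrm{Id},0]$ is the polynomial ring over the quaternions with $x$ commuting with coefficients. For $q=a+b\mathbf i+c\mathbf j+d\mathbf k$, $\mathrm{Re}(q)=a$, $\overline q=a-b\mathbf i-c\mathbf j-d\mathbf k$, $|q|=\sqrt{q\overline q}$. For $\mathbf a=(a_1,\dots,a_r)$, $P_{\mathbf a}=(x-a_r)\cdots(x-a_1)$; $\mathbf a$ is a $(\sigma,\delta)$-multiplicity sequence if $a_1$ is the only $b\in\mathbb{H}$ such that $x-b$ divides $P_{\mathbf a}$ on the right. *)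

(* Defs.v *)
From HB Require Import structures.
From mathcomp Require Import all_boot all_order all_algebra.
From mathcomp Require Import ring.
From mathcomp Require Import reals.
Set Implicit Arguments. Unset Strict Implicit. Unset Printing Implicit Defensive.
Import Order.TTheory GRing.Theory Num.Theory.
Local Open Scope ring_scope.

Section Quaternions.
Variable R : realType.

(* q = Quat a b c d  stands for  a + b i + c j + d k *)
Record quat := Quat { qre : R; qi : R; qj : R; qk : R }.

Definition quat2tuple (q : quat) := (qre q, qi q, qj q, qk q).
Definition tuple2quat (t : R * R * R * R) :=
  let: (a, b, c, d) := t in Quat a b c d.
Lemma quat2tupleK : cancel quat2tuple tuple2quat. Proof. by case. Qed.

HB.instance Definition _ := Equality.copy quat (can_type quat2tupleK).
HB.instance Definition _ := Choice.copy quat (can_type quat2tupleK).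

Definition qzero := Quat 0 0 0 0.
Definition qone := Quat 1 0 0 0.
Definition qadd (p q : quat) :=
  Quat (qre p + qre q) (qi p + qi q) (qj p + qj q) (qk p + qk q).
Definition qopp (p : quat) := Quat (- qre p) (- qi p) (- qj p) (- qk p).
(* Hamilton product, i^2 = j^2 = k^2 = ijk = -1 *)
Definition qmul (p q : quat) :=
  let: Quat a1 b1 c1 d1 := p in let: Quat a2 b2 c2 d2 := q in
  Quat (a1 * a2 - b1 * b2 - c1 * c2 - d1 * d2)
       (a1 * b2 + b1 * a2 + c1 * d2 - d1 * c2)
       (a1 * c2 - b1 * d2 + c1 * a2 + d1 * b2)
       (a1 * d2 + b1 * c2 - c1 * b2 + d1 * a2).

Lemma qaddA : associative qadd.
Proof. by case=> ? ? ? ?; case=> ? ? ? ?; case=> ? ? ? ?; rewrite /qadd /= !addrA. Qed.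
Lemma qaddC : commutative qadd.
Proof. by case=> ? ? ? ?; case=> ? ? ? ?; rewrite /qadd /= [X in Quat X _ _ _]addrC
  [X in Quat _ X _ _]addrC [X in Quat _ _ X _]addrC [X in Quat _ _ _ X]addrC. Qed.
Lemma qadd0 : left_id qzero qadd.
Proof. by case=> ? ? ? ?; rewrite /qadd /= !add0r. Qed.
Lemma qaddN : left_inverse qzero qopp qadd.
Proof. by case=> ? ? ? ?; rewrite /qadd /= !addNr. Qed.

HB.instance Definition _ := GRing.isZmodule.Build quat qaddA qaddC qadd0 qaddN.

Lemma qmulA : associative qmul.
Proof. case=> ? ? ? ?; case=> ? ? ? ?; case=> ? ? ? ?; rewrite /qmul /=; congr Quat; ring. Qed.
Lemma qmul1 : left_id qone qmul.
Proof. case=> ? ? ? ?; rewrite /qmul /=; congr Quat; ring. Qed.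
Lemma qmulr1 : right_id qone qmul.
Proof. case=> ? ? ? ?; rewrite /qmul /=; congr Quat; ring. Qed.
Lemma qmulDl : left_distributive qmul +%R.
Proof. case=> ? ? ? ?; case=> ? ? ? ?; case=> ? ? ? ?;
  rewrite /GRing.add /= /qadd /qmul /=; congr Quat; ring. Qed.
Lemma qmulDr : right_distributive qmul +%R.
Proof. case=> ? ? ? ?; case=> ? ? ? ?; case=> ? ? ? ?;
  rewrite /GRing.add /= /qadd /qmul /=; congr Quat; ring. Qed.
Lemma qone_neq0 : qone != 0.
Proof. apply/negP=> /eqP [] /eqP; by rewrite oner_eq0. Qed.

HB.instance Definition _ :=
  GRing.Zmodule_isNzRing.Build quat qmulA qmul1 qmulr1 qmulDl qmulDr qone_neq0.

Definition qreal (a : R) := Quat a 0 0 0.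
Definition Req (q : quat) := qre q.
Definition qconj (q : quat) := Quat (qre q) (- qi q) (- qj q) (- qk q).
Definition qnorm (q : quat) := Num.sqrt (qre (q * qconj q)).
Definition is_real_quat (q : quat) := exists a : R, q = qreal a.

(* H[x] = H[x; Id, 0] : {poly quat}, with 'X central.
   P_a = (x - a_r) ... (x - a_1)  for a = [:: a_1; ...; a_r] *)
Definition Pseq (a : seq quat) : {poly quat} :=
  \prod_(c <- rev a) ('X - c%:P).

Definition rdivides_lin (b : quat) (P : {poly quat}) :=
  exists Q : {poly quat}, P = Q * ('X - b%:P).

Definition mult_seq (a : seq quat) :=
  match a with
  | [::] => False
  | a1 :: _ => rdivides_lin a1 (Pseq a) /\
               forall b, rdivides_lin b (Pseq a) -> b = a1
  end.

End Quaternions.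

(* Main.v *)
Require Import Defs.
From HB Require Import structures.
From mathcomp Require Import all_boot all_order all_algebra reals.
From mathcomp Require Import ring lra.
Set Implicit Arguments. Unset Strict Implicit. Unset Printing Implicit Defensive.
Import Order.TTheory GRing.Theory Num.Theory.
Local Open Scope ring_scope.

Section Q.
Variable R : realType.
Local Notation H := (quat R).
Implicit Types (p q d : H) (r s : R).

Lemma qE (a b c d a' b' c' d' : R) :
  Quat a b c d = Quat a' b' c' d' <-> [/\ a = a', b = b', c = c' & d = d'].
Proof. by split=> [[-> -> -> ->]|[-> -> -> ->]]. Qed.

Lemma qaddE (p q : H) : p + q = qadd p q. Proof. by []. Qed.
Lemma qmulE (p q : H) : p * q = qmul p q. Proof. by []. Qed.
Lemma qoppE (p : H) : - p = qopp p. Proof. by []. Qed.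
Lemma q0E : (0 : H) = qzero R. Proof. by []. Qed.
Lemma q1E : (1 : H) = qone R. Proof. by []. Qed.

Ltac qsimpl := rewrite ?qaddE ?qmulE ?qoppE ?q0E ?q1E /qadd /qmul /qopp /qzero /qone
  /qconj /qreal /Req /=.
Ltac qring := qsimpl; apply/qE; split; ring.

Definition qN (q : H) := qre (q * qconj q).

Lemma qNE (a b c d : R) : qN (Quat a b c d) = a^+2 + b^+2 + c^+2 + d^+2.
Proof. rewrite /qN; qsimpl; ring. Qed.

Lemma qN_ge0 q : 0 <= qN q.
Proof. case: q => a b c d; rewrite qNE; nra. Qed.

Lemma qN_eq0 q : qN q = 0 -> q = 0.
Proof.
case: q => a b c d; rewrite qNE => h.
have ha : a = 0 by nra.
have hb : b = 0 by nra.
have hc : c = 0 by nra.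
have hd : d = 0 by nra.
by rewrite ha hb hc hd.
Qed.

Lemma qNM p q : qN (p * q) = qN p * qN q.
Proof. case: p => ????; case: q => ????; rewrite /qN; qsimpl; ring. Qed.

Lemma qmul_eq0 (p q : H) : p * q = 0 -> p = 0 \/ q = 0.
Proof.
move=> h; have : qN p * qN q = 0 by rewrite -qNM h /qN; qsimpl; ring.
move/eqP; rewrite mulf_eq0 => /orP [] /eqP /qN_eq0; tauto.
Qed.

Lemma mulIq (d x y : H) : d != 0 -> x * d = y * d -> x = y.
Proof.
move=> dn h; have : (x - y) * d = 0 by rewrite mulrBl h subrr.
case/qmul_eq0 => [/eqP|]; first by rewrite subr_eq0 => /eqP.
by move=> e; rewrite e eqxx in dn.
Qed.

Lemma mulqI (d x y : H) : d != 0 -> d * x = d * y -> x = y.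
Proof.
move=> dn h; have : d * (x - y) = 0 by rewrite mulrBr h subrr.
case/qmul_eq0 => [e|/eqP]; first by rewrite e eqxx in dn.
by rewrite subr_eq0 => /eqP.
Qed.

Lemma qrealC r (q : H) : qreal r * q = q * qreal r.
Proof. case: q => ????; qring. Qed.

Lemma qrealM r s : qreal r * qreal s = qreal (r * s) :> H.
Proof. qring. Qed.

Lemma qreal1 : qreal (1:R) = 1 :> H.
Proof. by []. Qed.

Lemma qmulconj q : q * qconj q = qreal (qN q).
Proof. case: q => ????; rewrite /qN; qring. Qed.

Lemma qconjmul q : qconj q * q = qreal (qN q).
Proof. case: q => ????; rewrite /qN; qring. Qed.

Lemma qaddconj q : q + qconj q = qreal (Req q + Req q).
Proof. case: q => ????; qring. Qed.

Lemma qsq q : q * q = qreal (Req q + Req q) * q - qreal (qN q).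
Proof. case: q => ????; rewrite /qN; qring. Qed.

Lemma qconjK q : qconj (qconj q) = q.
Proof. case: q => ????; qring. Qed.

Lemma qReC p q : Req (p * q) = Req (q * p).
Proof. case: p => ????; case: q => ????; qsimpl; ring. Qed.

Lemma qReM_real p r : Req (p * qreal r) = Req p * r.
Proof. case: p => ????; qsimpl; ring. Qed.

Lemma qconj_Re q : Req (qconj q) = Req q. Proof. by case: q. Qed.
Lemma qconj_N q : qN (qconj q) = qN q.
Proof. case: q => ????; rewrite !qNE /=; ring. Qed.

Lemma realP q : is_real_quat q <-> [/\ qi q = 0, qj q = 0 & qk q = 0].
Proof.
split; first by case=> a ->.
case: q => a b c d /= [-> -> ->]; by exists a.
Qed.

Lemma real_comm (a q : H) : is_real_quat a -> a * q = q * a.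
Proof. by case=> r ->; apply: qrealC. Qed.

Lemma nonreal_conj q : ~ is_real_quat q -> qconj q <> q.
Proof.
case: q => a b c d nr; rewrite /qconj /= => /qE [_ h1 h2 h3]; apply: nr; apply/realP => /=.
split; lra.
Qed.

Lemma conj_comm q : q * qconj q = qconj q * q.
Proof. by rewrite qmulconj qconjmul. Qed.

Definition qinv (d : H) := qreal (qN d)^-1 * qconj d.

Lemma qN_neq0 (d : H) : d != 0 -> qN d != 0.
Proof. by move=> dn; apply/eqP => /qN_eq0 e; rewrite e eqxx in dn. Qed.

Lemma qmulV d : d != 0 -> d * qinv d = 1.
Proof.
move=> /qN_neq0 n; rewrite /qinv mulrA -qrealC -mulrA qmulconj qrealM mulVf //.
Qed.

Lemma qmulVl d : d != 0 -> qinv d * d = 1.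
Proof.
move=> /qN_neq0 n; rewrite /qinv -mulrA qconjmul qrealM mulVf //.
Qed.

Lemma conj_class (d x y : H) : d != 0 -> x * d = d * y -> Req x = Req y /\ qN x = qN y.
Proof.
move=> dn h; have n := qN_neq0 dn; split.
  have : x * qreal (qN d) = d * (y * qconj d) by rewrite -qmulconj mulrA h mulrA.
  move/(congr1 (@Req R)); rewrite qReM_real qReC -mulrA qconjmul qReM_real => /eqP.
  by rewrite (inj_eq (mulIf n)) => /eqP.
have := congr1 qN h; rewrite !qNM mulrC => /eqP.
by rewrite (inj_eq (mulfI n)) => /eqP.
Qed.

Definition cond2 (a1 c : H) :=
  (c = a1 /\ is_real_quat a1) \/
  [/\ ~ is_real_quat a1, ~ is_real_quat c, Req c = Req a1, qN c = qN a1 & qconj c <> a1].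

Lemma L4 a1 c b : cond2 a1 c -> c * (b - a1) = (b - a1) * b -> b = a1.
Proof.
move=> hc eq; have [//|ne] := eqVneq b a1.
have dn : b - a1 != 0 by rewrite subr_eq0.
case: hc => [[ec ra]|[nr1 nr2 hre hn hcj]].
  by move: eq; rewrite ec (real_comm _ ra) => /(mulqI dn) ->.
have [h1 h2] := conj_class dn eq.
have en : qconj a1 - c != 0.
  by rewrite subr_eq0; apply/eqP => e; apply: hcj; rewrite -e qconjK.
apply: (mulqI en).
move: eq; rewrite mulrBr mulrBl (qsq b) -h1 -h2 hre hn -qaddconj -qconjmul.
rewrite !mulrBl mulrDl.
move: (c*b) (c*a1) (a1*b) (qconj a1 * b) (qconj a1 * a1) => [????] [????] [????] [????] [????].
qsimpl => /qE [????]; apply/qE; split; lra.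
Qed.

Lemma real_dec q : is_real_quat q \/ ~ is_real_quat q.
Proof.
case: (boolP [&& qi q == 0, qj q == 0 & qk q == 0]) => [/and3P [/eqP ? /eqP ? /eqP ?]|h].
  by left; apply/realP.
by right => /realP [e1 e2 e3]; move: h; rewrite e1 e2 e3 !eqxx.
Qed.

Lemma L2 a1 c : cond2 a1 c \/ exists b, b != a1 /\ c * (b - a1) = (b - a1) * b.
Proof.
have [->|ne] := eqVneq c a1.
  case: (real_dec a1) => ra; first by left; left.
  by left; right; split => //; apply: nonreal_conj.
have [com|ncom] := eqVneq (a1 * c) (c * a1).
  by right; exists c; split => //; rewrite mulrBr mulrBl com.
have nr1 : ~ is_real_quat a1.
  by move=> /(real_comm c) e; rewrite e eqxx in ncom.
have nr2 : ~ is_real_quat c.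
  by move=> /(real_comm a1) e; rewrite e eqxx in ncom.
have [[e1 e2]|ncls] : (Req c = Req a1 /\ qN c = qN a1) \/ ~ (Req c = Req a1 /\ qN c = qN a1).
    case: (eqVneq (Req c) (Req a1)) => h1; case: (eqVneq (qN c) (qN a1)) => h2;
    try (by left); right; case=> h3 h4; by [rewrite h3 eqxx in h1 | rewrite h4 eqxx in h2].
  left; right; split => // hc.
  by move: ncom; rewrite -hc -conj_comm eqxx.
right.
have en : qconj c - a1 != 0.
  rewrite subr_eq0; apply/eqP => e; apply: ncls; by rewrite -e qconj_Re qconj_N.
set e := qconj c - a1.
exists (qinv e * c * e).
set b := qinv e * c * e.
have eb : c * e = e * b.
  by rewrite /b (mulrA e) (mulrA e (qinv e)) qmulV // mul1r.
have [h1 h2] := conj_class en eb.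
split.
  by apply/eqP => hb; apply: ncls; rewrite h1 h2 hb.
move: eb; rewrite /e mulrBr mulrBl mulrBr mulrBl (qsq b) -h1 -h2 -qaddconj -qmulconj mulrDl.
move: (c*b) (c*a1) (a1*b) (qconj c * b) (c * qconj c) => [????] [????] [????] [????] [????].
qsimpl => /qE [????]; apply/qE; split; lra.
Qed.

Lemma evalG (Q : {poly H}) a b b' : b' * (b - a) = (b - a) * b ->
  (Q * ('X - a%:P)).[b] = Q.[b'] * (b - a).
Proof.
move=> hb; elim/poly_ind: Q => [|p c IH]; first by rewrite mul0r !horner0 mul0r.
rewrite mulrDl -mulrA -(commr_polyX ('X - a%:P)) mulrA hornerD hornerMX hornerCM
  hornerXsubC IH hornerMXaddC mulrDl -mulrA -hb mulrA //.
Qed.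

Lemma divX (P : {poly H}) b : exists Q, P = Q * ('X - b%:P) + (P.[b])%:P.
Proof.
elim/poly_ind: P => [|p c [Q IH]]; first by exists 0; rewrite mul0r horner0 add0r.
exists (Q * 'X + (p.[b])%:P).
rewrite hornerMXaddC {1}IH !mulrDl -!mulrA (commr_polyX ('X - b%:P)) polyCD polyCM.
rewrite -!addrA; congr (_ + _); rewrite addrA; congr (_ + _); by rewrite mulrBr subrK.
Qed.

Lemma rdivP b (P : {poly H}) : rdivides_lin b P <-> P.[b] = 0.
Proof.
split=> [[Q ->]|h].
  by rewrite (@evalG Q b b b) subrr ?mulr0 ?mul0r.

by have [Q e] := divX P b; exists Q; rewrite e h addr0.
Qed.

Lemma Pseq_cons (a1 : H) (rest : seq H) : Pseq (a1 :: rest) = Pseq rest * ('X - a1%:P).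
Proof. by rewrite /Pseq rev_cons big_rcons. Qed.

Lemma classL (Q : {poly H}) (r0 n0 : R) : exists A B : H, forall s : H, Req s = r0 -> qN s = n0 ->
  Q.[s] = A * s + B.
Proof.
elim/poly_ind: Q => [|p c [A [B IH]]]; first by exists 0, 0 => s _ _; rewrite horner0 mul0r addr0.
exists (A * qreal (r0 + r0) + B), (c - A * qreal n0) => s h1 h2.
rewrite hornerMXaddC IH // mulrDl -mulrA qsq h1 h2 mulrBr mulrA mulrDl.
move: (A * qreal (r0 + r0) * s) (A * qreal n0) (B * s) c => [????] [????] [????] [????].
qsimpl; apply/qE; split; lra.
Qed.

Lemma L3 (Q : {poly H}) (s1 s2 s : H) : Q.[s1] = 0 -> Q.[s2] = 0 -> s1 != s2 ->
  Req s1 = Req s -> qN s1 = qN s -> Req s2 = Req s -> qN s2 = qN s -> Q.[s] = 0.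
Proof.
move=> r1 r2 ne a1 b1 a2 b2.
have [A [B h]] := classL Q (Req s) (qN s).
move: r1 r2; rewrite !h // => /eqP e1 /eqP e2.
move: e1 e2; rewrite !addr_eq0 => /eqP e1 /eqP e2.
have : A * (s1 - s2) = 0 by rewrite mulrBr e1 e2 subrr.
case/qmul_eq0 => [hA|/eqP]; last by rewrite subr_eq0 (negbTE ne).
by rewrite hA mul0r add0r; apply/eqP; rewrite -oppr_eq0 -e1 hA mul0r.
Qed.

Definition U (a1 : H) (P : {poly H}) := forall b, P.[b] = 0 -> b = a1.
Fixpoint Tr (a1 : H) (rest : seq H) : Prop :=
  if rest is a2 :: r then cond2 a1 a2 /\ Tr a2 r else True.

Lemma helper2 (Q : {poly H}) a1 c : U a1 (Q * ('X - a1%:P)) -> Q.[c] = 0 -> cond2 a1 c.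
Proof.
move=> hU hc; case: (L2 a1 c) => // [[b [ne e]]].
have := hU b; rewrite (@evalG Q a1 b c e) hc mul0r => /(_ erefl) eb.
by rewrite eb eqxx in ne.
Qed.

Lemma main_ind (rest : seq H) : forall a1, U a1 (Pseq (a1 :: rest)) <-> Tr a1 rest.
Proof.
elim: rest => [|a2 r IH] a1.
  rewrite Pseq_cons /Pseq big_nil mul1r; split=> // _ b.
  by rewrite hornerXsubC => /eqP; rewrite subr_eq0 => /eqP.
rewrite Pseq_cons; set Q := Pseq (a2 :: r).
have Qa2 : Q.[a2] = 0 by apply/rdivP; exists (Pseq r); rewrite /Q Pseq_cons.
split.
  move=> hU; have c2 := helper2 hU Qa2; split => //; apply/IH => c hc.
  have c2' := helper2 hU hc.
  have [//|ne] := eqVneq c a2; exfalso.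
  case: c2' => [[ec ra]|[nr1 nrc re1 n1 cj1]].
    case: c2 => [[ea _]|[nr _ _ _ _]]; last by apply: nr.
    by rewrite ec ea eqxx in ne.
  case: c2 => [[_ ra]|[_ nr2 re2 n2 cj2]]; first by apply: nr1.
  have hq : Q.[qconj a1] = 0.
    apply: (L3 hc Qa2 ne); by rewrite ?qconj_Re ?qconj_N.
  case: (helper2 hU hq) => [[e _]|[_ _ _ _ h]].
    by apply: (nonreal_conj nr1).
  by apply: h; rewrite qconjK.
case=> c2 hT; have hU := (IH a2).2 hT => b hb.
have [//|ne] := eqVneq b a1.
have dn : b - a1 != 0 by rewrite subr_eq0.
set d := b - a1 in dn.
have eb : (d * b * qinv d) * (b - a1) = (b - a1) * b.
  by rewrite -/d -mulrA qmulVl // mulr1.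
move: hb; rewrite (@evalG Q a1 b _ eb) => /qmul_eq0 [/hU e|e]; last first.
  by move/eqP: e; rewrite subr_eq0 => /eqP.
by apply: (L4 c2); rewrite -e.
Qed.

Definition RHS (a : seq H) :=
        ((forall i, (i < size a)%N -> a`_i = a`_0) /\ is_real_quat a`_0)
        \/
        ((forall i, (i < size a)%N -> ~ is_real_quat a`_i) /\
         (forall i, (i.+1 < size a)%N ->
            [/\ Req a`_i.+1 = Req a`_i,
                qnorm a`_i.+1 = qnorm a`_i
              & qconj a`_i.+1 <> a`_i])).

Lemma qnormP p q : qnorm p = qnorm q <-> qN p = qN q.
Proof.
rewrite /qnorm -/(qN p) -/(qN q); split=> [h|->] //.
by apply/eqP; rewrite -eqr_sqrt ?qN_ge0 //; apply/eqP.
Qed.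

Lemma rhs_tr (rest : seq H) : forall a1, RHS (a1 :: rest) <-> Tr a1 rest.
Proof.
elim: rest => [|a2 r IH] a1.
  split=> // _; case: (real_dec a1) => ra.
    by left; split => // -[].
  by right; split => // -[].
rewrite /= -IH /RHS; split.
  case=> [[hall hr]|[hnr hch]].
    have e1 : a2 = a1 by apply: (hall 1%N).
    split; first by left.
    left; split; last by rewrite e1.
    by move=> i hi /=; have := hall i.+1 hi; rewrite /= => ->; rewrite e1.
  split.
    have [h1 h2 h3] := hch 0%N erefl.
    by right; split => //; [apply: (hnr 0%N) | apply: (hnr 1%N) | apply/qnormP].
  right; split; first by move=> i hi; apply: (hnr i.+1).
  by move=> i hi; apply: (hch i.+1).
case=> c2 [[hall hr]|[hnr hch]].
  case: c2 => [[e ra]|[_ nr2 _ _ _]]; last by [].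
  left; split => // -[|i] hi //=; rewrite -e; exact: (hall i).
case: c2 => [[e ra]|[nr1 nr2 re n cj]].
  by exfalso; apply: (hnr 0%N); rewrite //= e.
right; split; first by move=> -[|i] hi //=; apply: (hnr i).
move=> -[|i] hi /=; first by split => //; apply/qnormP.
exact: (hch i).
Qed.
End Q.

Lemma part1 (R : realType) (a : seq (quat R)) : (0 < size a)%N -> (mult_seq a <-> RHS a).
Proof.
case: a => [//|a1 rest] _; rewrite rhs_tr -main_ind /mult_seq /U; split.
  by case=> _ h b hb; apply: h; apply/rdivP.
move=> h; split; first by exists (Pseq rest); rewrite Pseq_cons.
by move=> b /rdivP; apply: h.
Qed.

Theorem mainTheorem17 (R : realType) :
  (forall a : seq (quat R), (0 < size a)%N ->
     (mult_seq a <->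
        ((forall i, (i < size a)%N -> a`_i = a`_0) /\ is_real_quat a`_0)
        \/
        ((forall i, (i < size a)%N -> ~ is_real_quat a`_i) /\
         (forall i, (i.+1 < size a)%N ->
            [/\ Req a`_i.+1 = Req a`_i,
                qnorm a`_i.+1 = qnorm a`_i
              & qconj a`_i.+1 <> a`_i]))))
  /\
  (forall (b : quat R) (r : nat), (0 < r)%N -> mult_seq (nseq r b)).
Proof.
split; first exact: part1.
move=> b r hr; apply/part1; rewrite ?size_nseq //; rewrite /RHS size_nseq.
case: (real_dec b) => rb.
  by left; split => [i hi|]; rewrite !nth_nseq ?hi ?hr.
right; split=> i hi.
  by rewrite nth_nseq hi.
have hi' : (i < r)%N by rewrite (ltn_trans _ hi) // ltnSn.
by rewrite !nth_nseq hi hi'; split => //; apply: nonreal_conj.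
Qed.
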